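(* Let $G$ be a finite group, $\Lambda$ an absolutely irreducible $\mathbb Z[G]$-module of finite rank, $W=\Lambda\otimes\mathbb Q$, $w$ a weight with associated form $(\,,\,)$, $H=\mathrm{Stab}_G(w)$, and let $\{g_1,\dots,g_d\}$ be a set of representatives of the left cosets of $H$ in $G$. Then $(g_iw,g_jw)-(w,w)-1$ is a non-negative integer for all $i\ne j$.
   Context: A weight of $\Lambda$ is $w\in W$ with $gw-w\in\Lambda$ for all $g\in G$. $(\,,\,)$ is the negative definite $G$-invariant symmetric bilinear form on $W$ such that (i) $(w,\lambda)\in\mathbb Z$ for all $\lambda\in\Lambda$, and (ii) every $G$-invariant symmetric bilinear form satisfying (i) is an integer multiple of it. $H=\{g\in G:gw=w\}$. *)

(* Defs.v *)
From HB Require Import structures.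
From mathcomp Require Import all_boot all_order all_algebra all_fingroup.
From mathcomp Require Import mxrepresentation.
Set Implicit Arguments. Unset Strict Implicit. Unset Printing Implicit Defensive.
Import Order.TTheory GRing.Theory Num.Theory.
Local Open Scope ring_scope.

(* Conventions: Lambda = Z^n (integral row vectors) inside W = Q^n = 'rV[rat]_n.
   The representation rG : mx_representation rat G n acts on rows on the right;
   the left G-action on W is  g . v := v *m rG g^-1. *)

Definition wact (gT : finGroupType) (G : {group gT}) (n : nat)
  (rG : mx_representation rat G n) (g : gT) (v : 'rV[rat]_n) : 'rV[rat]_n :=
  v *m rG g^-1%g.

Definition in_lattice (n : nat) (v : 'rV[rat]_n) : Prop := v \is a mxOver Num.int.

Definition integral_rep (gT : finGroupType) (G : {group gT}) (n : nat)
  (rG : mx_representation rat G n) : Prop :=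
  forall g, g \in G -> rG g \is a mxOver Num.int.

Definition is_weight (gT : finGroupType) (G : {group gT}) (n : nat)
  (rG : mx_representation rat G n) (w : 'rV[rat]_n) : Prop :=
  forall g, g \in G -> in_lattice (wact rG g w - w).

Definition bform (n : nat) (M : 'M[rat]_n) (u v : 'rV[rat]_n) : rat :=
  (u *m M *m v^T) 0 0.

Definition sym_inv_form (gT : finGroupType) (G : {group gT}) (n : nat)
  (rG : mx_representation rat G n) (M : 'M[rat]_n) : Prop :=
  M^T = M /\ forall g, g \in G -> forall u v, bform M (wact rG g u) (wact rG g v) = bform M u v.

Definition neg_definite (n : nat) (M : 'M[rat]_n) : Prop :=
  forall v : 'rV[rat]_n, v != 0 -> bform M v v < 0.

Definition integral_on_lattice (n : nat) (M : 'M[rat]_n) (w : 'rV[rat]_n) : Prop :=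
  forall l : 'rV[rat]_n, in_lattice l -> bform M w l \is a Num.int.

Definition assoc_form (gT : finGroupType) (G : {group gT}) (n : nat)
  (rG : mx_representation rat G n) (w : 'rV[rat]_n) (M : 'M[rat]_n) : Prop :=
  [/\ sym_inv_form rG M, neg_definite M, integral_on_lattice M w &
      forall M' : 'M[rat]_n, sym_inv_form rG M' -> integral_on_lattice M' w ->
        exists k : int, M' = k%:~R *: M].

Definition stab (gT : finGroupType) (G : {group gT}) (n : nat)
  (rG : mx_representation rat G n) (w : 'rV[rat]_n) : {set gT} :=
  [set g in G | wact rG g w == w].

(* Main.v *)
Require Import Defs.
From HB Require Import structures.
From mathcomp Require Import all_boot all_order all_algebra all_fingroup.
From mathcomp Require Import mxrepresentation.
From mathcomp Require Import lra.
Import Order.TTheory GRing.Theory Num.Theory.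
Local Open Scope ring_scope.

Lemma bformBl n (M : 'M[rat]_n) u u' v : bform M (u - u') v = bform M u v - bform M u' v.
Proof. by rewrite /bform !mulmxBl !mxE. Qed.

Lemma bformBr n (M : 'M[rat]_n) u v v' : bform M u (v - v') = bform M u v - bform M u v'.
Proof. by rewrite /bform linearB /= mulmxBr !mxE. Qed.

Lemma bform_sym n (M : 'M[rat]_n) u v : M^T = M -> bform M u v = bform M v u.
Proof.
move=> sM; rewrite /bform.
have tr (A : 'M[rat]_1) : A 0 0 = A^T 0 0 by rewrite mxE.
by rewrite [LHS]tr !trmx_mul trmxK sM mulmxA.
Qed.

Lemma latB n (a b : 'rV[rat]_n) : in_lattice a -> in_lattice b -> in_lattice (a - b).
Proof. rewrite /in_lattice => /mxOverP ha /mxOverP hb; apply/mxOverP => i j.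
by rewrite !mxE rpredB. Qed.

Theorem lemma3p1 (gT : finGroupType) (G : {group gT}) (n : nat)
  (rG : mx_representation rat G n) (w : 'rV[rat]_n) (M : 'M[rat]_n)
  (X : {set gT}) :
  integral_rep rG ->
  mx_absolutely_irreducible rG ->
  is_weight rG w ->
  assoc_form rG w M ->
  is_transversal X (lcosets (stab rG w) G) G ->
  forall x y, x \in X -> y \in X -> x != y ->
    bform M (wact rG x w) (wact rG y w) - bform M w w - 1 \is a Num.nat.
Proof.
move=> intR _ wW [[sM invM] negM intM _] trX x y xX yX nxy.
have sXG : X \subset G by case/and3P: trX.
have xG : x \in G := subsetP sXG x xX.
have yG : y \in G := subsetP sXG y yX.
set a := wact rG x w; set b := wact rG y w.
have lat_act g v : g \in G -> in_lattice v -> in_lattice (wact rG g v).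
  by move=> gG lv; apply: mxOverM => //; apply: intR; rewrite groupV.
have laB : in_lattice (b - a).
  have -> : b - a = (b - w) - (a - w) by rewrite opprB addrA subrK.
  by apply: latB; apply: wW.
have Hint : bform M a b - bform M w w \is a Num.int.
  have Haa : bform M a a = bform M w w by rewrite invM.
  have -> : bform M a b - bform M w w = bform M a (b - a) by rewrite bformBr Haa.
  have -> : b - a = wact rG x ((b - a) *m rG x).
    by rewrite /wact repr_mxK.
  rewrite invM //; apply: intM; apply: mxOverM => //; exact: intR.
have nab : a - b != 0.
  rewrite subr_eq0; apply/negP=> /eqP eab.
  pose B := lcoset (stab rG w) x.
  have BP : B \in lcosets (stab rG w) G by apply: imset_f.
  have xB : x \in B by rewrite /B lcosetE mem_lcoset mulVg inE group1 /wact invg1 repr_mx1 mulmx1 eqxx.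
  have yB : y \in B.
    rewrite /B lcosetE mem_lcoset inE groupM ?groupV //=.
    rewrite /wact invMg invgK repr_mxM ?groupV // mulmxA.
    by rewrite -/(wact rG y w) -/b -eab /a /wact repr_mxKV.
  case/and3P: trX => _ _ /forallP /(_ B); rewrite BP /= => /cards1P [z Hz].
  have : x \in X :&: B by rewrite inE xX xB.
  have : y \in X :&: B by rewrite inE yX yB.
  by rewrite Hz !inE => /eqP ey /eqP ex; rewrite ex ey eqxx in nxy.
have Hneg := negM _ nab.
rewrite !bformBl !bformBr (@bform_sym _ M b a sM) in Hneg.
have Haa : bform M a a = bform M w w by rewrite invM.
have Hbb : bform M b b = bform M w w by rewrite invM.
rewrite Haa Hbb in Hneg.
have Hpos : 0 < bform M a b - bform M w w.
  move: Hneg; set p := bform M a b; set q := bform M w w; move=> h; lra.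
move: Hint Hpos; set z := bform M a b - bform M w w => zi zp.
have [k ek] : exists k : int, z = k%:~R by apply/intrP.
rewrite ek ltr0z in zp.
rewrite natrEint rpredB ?rpred1 //= subr_ge0 ek.
by rewrite (_ : 1 = 1%:~R) // ler_int.

Qed.
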